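(* Let $\mathfrak F$ be a Frankenstein graph with partition $\{\mathsf G_1,\dots,\mathsf G_m\}$. Then there exists a permutation $\sigma$ of $\{1,\dots,m\}$ such that, writing $\mathfrak F_i=\mathsf G_{\sigma(1)}\cup\dots\cup\mathsf G_{\sigma(i)}$, we have $|V(\mathfrak F_i)\cap V(\mathsf G_{\sigma(i+1)})|\le 1$ for every $i\in\{1,\dots,m-1\}$.
   Context: A (colored) graph is a finite set $\mathsf G$ of pairs $(e,\alpha)$, where the $e$'s are pairwise distinct 2-element subsets of a vertex set and $\alpha$ is a color (colors may repeat). $V(\mathsf G)$ is its vertex set and $\chi(\mathsf G)$ its set of colors; $\mathsf G$ is rainbow if $|\chi(\mathsf G)|=|\mathsf G|$ and almost rainbow if $|\chi(\mathsf G)|=|\mathsf G|-1$. A subgraph is a subset. Paths, cycles, trees are colored graphs whose underlying uncolored edges form a path (two distinct terminals), cycle, or tree; lengths count edges. A long rainbow odd cycle is a rainbow cycle of odd length at least $7$. A theta graph is a union $\mathsf P_1\cup\mathsf P_2\cup\mathsf P_3$ of three paths with the same terminals $s\neq t$ such that any two share no vertex other than $s,t$ and no underlying uncolored edge. A bad piece is an almost rainbow theta graph with at least $6$ vertices that is the union of three rainbow paths as in the definition of a theta graph. A partition of a graph $\mathsf G$ is a collection $\{\mathsf G_1,\dots,\mathsf G_m\}$ of graphs with $\mathsf G=\bigcup_i\mathsf G_i$ and, for $i\ne j$, $|V(\mathsf G_i)\cap V(\mathsf G_j)|\le 1$ and $\chi(\mathsf G_i)\cap\chi(\mathsf G_j)=\emptyset$;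 its members are called parts. A Frankenstein graph is a graph $\mathfrak F$ together with a partition $\{\mathsf C_1,\dots,\mathsf C_c,\mathsf B_1,\dots,\mathsf B_b,\mathsf T_1,\dots,\mathsf T_t\}$ ($c,b,t\ge0$, $c+b+t\ge1$) in which the $\mathsf C_i$ are long rainbow odd cycles, the $\mathsf B_i$ are bad pieces and the $\mathsf T_i$ are rainbow trees, such that (F1) $V(\mathsf T_p)\cap V(\mathsf T_q)=\emptyset$ for $p\neq q$, and (F2) no subgraph of $\mathfrak F$ is a rainbow even cycle. *)

(* Defs.v *)
From mathcomp Require Import all_boot all_fingroup.
Set Implicit Arguments. Unset Strict Implicit. Unset Printing Implicit Defensive.

Section ColoredGraphs.
Variables (T C : finType).

Definition cgraph_of := {set ({set T} * C)}.

Definition is_cgraph (G : cgraph_of) : Prop :=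
  (forall x, x \in G -> #|x.1| = 2) /\
  (forall x y, x \in G -> y \in G -> x.1 = y.1 -> x = y).

Definition edges (G : cgraph_of) : {set {set T}} := [set x.1 | x in G].
Definition verts (G : cgraph_of) : {set T} := \bigcup_(x in G) x.1.
Definition colors (G : cgraph_of) : {set C} := [set x.2 | x in G].

Definition rainbow (G : cgraph_of) : Prop := #|colors G| = #|G|.
Definition almost_rainbow (G : cgraph_of) : Prop := #|colors G| = #|G| - 1.

Definition is_path_st (G : cgraph_of) (a b : T) : Prop :=
  exists s : seq T, [/\ uniq s, 2 <= size s, head a s = a, last a s = b &
    edges G = [set [set p.1; p.2] | p in zip s (behead s)]].

Definition is_path (G : cgraph_of) : Prop :=
  exists a b, a != b /\ is_path_st G a b.

Definition is_cycle (G : cgraph_of) : Prop :=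
  exists s : seq T, [/\ uniq s, 3 <= size s &
    edges G = [set [set p.1; p.2] | p in zip s (rot 1 s)]].

Definition adj (G : cgraph_of) : rel T := fun x y => [set x; y] \in edges G.

Definition connected (G : cgraph_of) : Prop :=
  forall x y, x \in verts G -> y \in verts G -> connect (adj G) x y.

Definition is_tree (G : cgraph_of) : Prop :=
  [/\ G != set0, connected G & forall H : cgraph_of, H \subset G -> ~ is_cycle H].

Definition long_rainbow_odd_cycle (G : cgraph_of) : Prop :=
  [/\ is_cycle G, rainbow G, odd #|G| & 7 <= #|G|].

Definition rainbow_even_cycle (G : cgraph_of) : Prop :=
  [/\ is_cycle G, rainbow G & ~~ odd #|G|].

Definition theta_paths (P1 P2 P3 : cgraph_of) (s t : T) : Prop :=
  [/\ s != t /\ is_path_st P1 s t, is_path_st P2 s t, is_path_st P3 s t,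
      [/\ verts P1 :&: verts P2 \subset [set s; t],
          verts P1 :&: verts P3 \subset [set s; t] &
          verts P2 :&: verts P3 \subset [set s; t]] &
      [/\ [disjoint edges P1 & edges P2],
          [disjoint edges P1 & edges P3] &
          [disjoint edges P2 & edges P3]]].

Definition is_theta (G : cgraph_of) : Prop :=
  exists P1 P2 P3 s t, theta_paths P1 P2 P3 s t /\ G = P1 :|: P2 :|: P3.

Definition bad_piece (G : cgraph_of) : Prop :=
  [/\ almost_rainbow G, 6 <= #|verts G| &
    exists P1 P2 P3 s t, [/\ theta_paths P1 P2 P3 s t, G = P1 :|: P2 :|: P3,
                            rainbow P1, rainbow P2 & rainbow P3]].

Definition is_partition (m : nat) (F : cgraph_of) (P : 'I_m -> cgraph_of) : Prop :=
  [/\ F = \bigcup_(i < m) P i,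
      forall i j : 'I_m, i != j -> #|verts (P i) :&: verts (P j)| <= 1 &
      forall i j : 'I_m, i != j -> [disjoint colors (P i) & colors (P j)]].

Definition frankenstein (m : nat) (F : cgraph_of) (P : 'I_m -> cgraph_of) : Prop :=
  [/\ is_cgraph F /\ 1 <= m, is_partition F P,
      forall i : 'I_m, [\/ long_rainbow_odd_cycle (P i), bad_piece (P i)
                          | (is_tree (P i) /\ rainbow (P i))],
      forall i j : 'I_m, i != j -> is_tree (P i) -> rainbow (P i) ->
        is_tree (P j) -> rainbow (P j) -> [disjoint verts (P i) & verts (P j)] &
      forall H : cgraph_of, H \subset F -> ~ rainbow_even_cycle H].

End ColoredGraphs.

(* Main.v *)
Require Import Defs.
From mathcomp Require Import all_boot all_fingroup.
Set Implicit Arguments. Unset Strict Implicit. Unset Printing Implicit Defensive.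

Section Seqs.
Variable T : finType.
Implicit Types (x y z a b : T) (r s : seq T).

Fixpoint pe x r : seq {set T} :=
  if r is y :: r' then [set x; y] :: pe y r' else [::].

Lemma pe_cat x r1 r2 : pe x (r1 ++ r2) = pe x r1 ++ pe (last x r1) r2.
Proof. by elim: r1 x => [|y r1 IH] x //=; rewrite IH. Qed.

Lemma pe_rcons x r z : pe x (rcons r z) = rcons (pe x r) [set last x r; z].
Proof. by rewrite -cats1 pe_cat cats1. Qed.

Lemma size_pe x r : size (pe x r) = size r.
Proof. by elim: r x => [|y r IH] x //=; rewrite IH. Qed.

Lemma pe_rev x r : pe (last x r) (rev (belast x r)) = rev (pe x r).
Proof.
elim: r x => [|y r IH] x //=.
rewrite rev_cons pe_rcons IH rev_cons; congr rcons.
have -> : last (last y r) (rev (belast y r)) = y.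
  by case: r {IH} => [|z r] //=; rewrite rev_cons last_rcons.
by rewrite setUC.
Qed.

Lemma pe_mem x r e : e \in pe x r ->
  exists a b, [/\ e = [set a; b], a \in x :: r & b \in r].
Proof.
elim: r x => [|y r IH] x //=; rewrite inE => /orP[/eqP->|/IH[a [b [-> Ha Hb]]]].
  by exists x, y; rewrite !inE !eqxx.
by exists a, b; split => //; rewrite inE ?Ha ?Hb ?orbT //; move: Ha; rewrite inE => /orP[/eqP->|->]; rewrite ?eqxx ?orbT.
Qed.

Lemma pe_uniq x r : uniq (x :: r) -> uniq (pe x r).
Proof.
elim: r x => [|y r IH] x //= /andP[]; rewrite inE negb_or => /andP[xy xr] /andP[yr ur].
rewrite IH /= ?yr ?ur // andbT; apply/negP => /pe_mem[a [b [e ha hb]]].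
have: x \in [set a; b] by rewrite -e !inE eqxx.
rewrite !inE => /orP[]/eqP E; subst.
  by move: ha; rewrite inE (negbTE xy) (negbTE xr).
by rewrite hb in xr.
Qed.

Lemma pe_vert x r v : v \in x :: r -> r != [::] -> exists2 e, e \in pe x r & v \in e.
Proof.
elim: r x => [|y r IH] x // Hv _.
move: Hv; rewrite inE => /orP[/eqP->|Hv].
  by exists [set x; y]; rewrite !inE ?eqxx.
case: r IH Hv => [|z r] IH Hv.
  by exists [set x; y]; move: Hv; rewrite !inE // => ->; rewrite orbT.
have [e He Hve] := IH y Hv isT; by exists e; rewrite // inE He orbT.
Qed.

Lemma pe_zip x r : pe x r = [seq [set p.1; p.2] | p <- zip (x :: r) r].
Proof. by elim: r x => [|y r IH] x //=; rewrite IH. Qed.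

Lemma pe_zip_cyc x s z : pe x (rcons s z) = [seq [set p.1; p.2] | p <- zip (x :: s) (rcons s z)].
Proof. by elim: s x => [|y s IH] x //=; rewrite IH. Qed.

Definition cyc a s := pe a (rcons s a).

Lemma cyc_rot a s1 x s2 :
  perm_eq (cyc a (s1 ++ x :: s2)) (cyc x (s2 ++ a :: s1)).
Proof.
rewrite /cyc -!cats1 -!catA !cat_cons !pe_cat /= !cats1 !pe_rcons.
rewrite -!cats1 /=.
set A := pe a s1; set B := pe x s2.
set e1 := [set last a s1; x]; set e2 := [set last x s2; a].
rewrite (perm_catC A) /= -catA /=.
have -> : B ++ e2 :: A ++ [:: e1] = rcons (B ++ e2 :: A) e1 by rewrite -cats1 -catA.
by rewrite perm_sym perm_rcons.
Qed.


Lemma uniq_map_inj (A B : eqType) (f : A -> B) (l : seq A) (u v : A) :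
  uniq (map f l) -> u \in l -> v \in l -> f u = f v -> u = v.
Proof.
elim: l => [|z l IH] //= /andP[nz us]; rewrite !inE => /orP[/eqP->|xs] /orP[/eqP->|ys] //.
- by move=> E; move: nz; rewrite E map_f.
- by move=> E; move: nz; rewrite -E map_f.
- exact: IH.
Qed.

Lemma last_neq_head (y : T) s : s != [::] -> uniq (y :: s) -> last y s != y.
Proof.
case: s => [|z s] // _ /andP[ys _]; apply/eqP => E.
by have := mem_last z s; rewrite (_ : last z s = y) // (negbTE ys).
Qed.

Lemma set2_eq_l (a b c d : T) : [set a; b] = [set c; d] -> a != c -> a = d.
Proof. move=> E ac; have: a \in [set c; d] by rewrite -E !inE eqxx. by rewrite !inE (negbTE ac) => /eqP. Qed.

Lemma uniq_cyc (a : T) s : uniq (a :: s) -> 2 <= size s -> uniq (cyc a s).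
Proof.
case: s => [|y s] //= /andP[]; rewrite inE negb_or => /andP[ay as_] Hu Hs.
rewrite /cyc /= pe_rcons /=.
have Hs' : s != [::] by case: s Hs {as_ Hu}.
have Hl : last y s != y by exact: last_neq_head.
have nin : [set last y s; a] \notin pe y s.
  apply/negP => /pe_mem[u [v [E Hu' Hv]]].
  have : a \in [set u; v] by rewrite -E !inE eqxx orbT.
  rewrite !inE => /orP[]/eqP Ea.
    by move: Hu'; rewrite -Ea inE (negbTE ay) (negbTE as_).
  by move: Hv; rewrite -Ea (negbTE as_).
rewrite -cats1 cat_uniq /= pe_uniq // orbF nin andbT mem_cat inE negb_or andbT.
apply/andP; split.
  apply/negP => /pe_mem[u [v [E Hu' Hv]]].
  have : a \in [set u; v] by rewrite -E !inE eqxx.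
  rewrite !inE => /orP[]/eqP Ea.
    by move: Hu'; rewrite -Ea inE (negbTE ay) (negbTE as_).
  by move: Hv; rewrite -Ea (negbTE as_).
apply/eqP => E.
have : y \in [set last y s; a] by rewrite -E !inE eqxx orbT.
by rewrite !inE eq_sym (negbTE Hl) /= eq_sym (negbTE ay).
Qed.

End Seqs.

Section Col.
Variables (T C : finType) (F : cgraph_of T C).
Hypothesis HF : is_cgraph F.
Implicit Types (x y z a b v w : T) (r s : seq T) (E : {set {set T}}) (G : cgraph_of T C).

Definition col (e : {set T}) : option C := omap snd [pick u in F | u.1 == e].

Lemma colE u : u \in F -> col u.1 = Some u.2.
Proof.
move=> uF; rewrite /col; case: pickP => [u' /andP[u'F /eqP E]|/(_ u)]; last by rewrite uF eqxx.
by rewrite (HF.2 _ _ u'F uF E).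
Qed.

Lemma edgesP G e : reflect (exists2 u, u \in G & e = u.1) (e \in edges G).
Proof. exact: imsetP. Qed.

Lemma vertsP G v : reflect (exists2 u, u \in G & v \in u.1) (v \in verts G).
Proof. exact: bigcupP. Qed.

Lemma vertsE G v : reflect (exists2 e, e \in edges G & v \in e) (v \in verts G).
Proof.
apply: (iffP (vertsP G v)) => [[u uG vu]|[e /edgesP[u uG ->] vu]]; last by exists u.
by exists u.1 => //; apply/edgesP; exists u.
Qed.

Lemma rainbow_inj G : rainbow G -> {in G &, injective snd}.
Proof. by move=> Hr; apply/imset_injP; rewrite /rainbow /colors in Hr; rewrite Hr. Qed.

Lemma col_inj G : G \subset F -> {in G &, injective snd} -> {in edges G &, injective col}.
Proof.
move=> GF Hi e e' /edgesP[u uG ->] /edgesP[u' u'G ->].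
rewrite !colE ?(subsetP GF) // => -[E]; by rewrite (Hi _ _ uG u'G E).
Qed.

Lemma uniq_col G L : G \subset F -> {in G &, injective snd} -> uniq L ->
  all (fun e => e \in edges G) L -> uniq (map col L).
Proof.
move=> GF Hi uL /allP aL; rewrite map_inj_in_uniq // => e e' He He'.
exact: (col_inj GF Hi (aL _ He) (aL _ He')).
Qed.

Lemma edges_sub G G' : G \subset G' -> edges G \subset edges G'.
Proof. by move=> H; apply: imsetS. Qed.

Lemma verts_sub G G' : G \subset G' -> verts G \subset verts G'.
Proof.
move=> H; apply/subsetP => v /vertsP[u uG vu]; apply/vertsP; exists u => //; exact: (subsetP H).
Qed.

Lemma edges_card2 e : e \in edges F -> #|e| = 2.
Proof. by case/edgesP => u uF ->; exact: HF.1. Qed.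

Definition pth E x r y :=
  [/\ uniq (x :: r), last x r = y, all (fun e => e \in E) (pe x r)
    & uniq (map col (pe x r))].

Lemma pth_sub E E' x r y : E \subset E' -> pth E x r y -> pth E' x r y.
Proof.
move=> H [u l a c]; split => //; apply/allP => e He; apply: (subsetP H).
exact: (allP a).
Qed.

Lemma pth_rev E x r y : pth E x r y -> pth E y (rev (belast x r)) x.
Proof.
have Hrev : last x r :: rev (belast x r) = rev (x :: r) by rewrite [in RHS]lastI rev_rcons.
case=> u l a c; subst y; split.
- by rewrite Hrev rev_uniq.
- by case: r Hrev {u a c} => [|z r] //= _; rewrite rev_cons last_rcons.
- by rewrite pe_rev all_rev.
- by rewrite pe_rev map_rev rev_uniq.
Qed.

Lemma pth_cat E x r1 y r2 z : pth E x r1 y -> pth E y r2 z ->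
  {in r2, forall v, v \notin x :: r1} ->
  {in pe x r1 & pe y r2, forall e e', col e != col e'} ->
  pth E x (r1 ++ r2) z.
Proof.
move=> [u1 l1 a1 c1] [u2 l2 a2 c2] Hv Hc; split.
- rewrite -cat_cons cat_uniq u1 /=; move: u2 => /= /andP[_ ->]; rewrite andbT.
  by apply/hasPn => v /Hv.
- by rewrite last_cat l1.
- by rewrite pe_cat l1 all_cat a1 a2.
- rewrite pe_cat l1 map_cat cat_uniq c1 c2 andbT /=; apply/hasPn => c /mapP[e' He' ->].
  by apply/mapP => -[e He /eqP]; rewrite eq_sym; apply/negP; exact: Hc.
Qed.

Lemma pth_prefix E x r1 r2 z : pth E x (r1 ++ r2) z -> pth E x r1 (last x r1).
Proof.
move=> [u l a c]; split => //.
- by move: u; rewrite -cat_cons cat_uniq => /andP[].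
- by move: a; rewrite pe_cat all_cat => /andP[].
- by move: c; rewrite pe_cat map_cat cat_uniq => /andP[].
Qed.

Lemma pth_suffix E x r1 r2 z : pth E x (r1 ++ r2) z -> pth E (last x r1) r2 z.
Proof.
move=> [u l a c]; split => //.
- by move: u; rewrite -cat_cons lastI cat_rcons cat_uniq => /and3P[_ _ ->].
- by rewrite -l last_cat.
- by move: a; rewrite pe_cat all_cat => /andP[].
- by move: c; rewrite pe_cat map_cat cat_uniq => /and3P[].
Qed.

Lemma pth_verts G x r y : pth (edges G) x r y -> {subset r <= verts G}
  /\ (r != [::] -> x \in verts G).
Proof.
case=> _ _ /allP a _; split.
  move=> v vr; have vr' : v \in x :: r by rewrite inE vr orbT.
  have rn : r != [::] by case: r vr {a vr'}.
  have [e He ve] := pe_vert vr' rn.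
  by apply/vertsE; exists e => //; exact: a.
move=> rn; have [e He ve] := pe_vert (mem_head x r) rn.
by apply/vertsE; exists e => //; exact: a.
Qed.

End Col.

Section Cyc.
Variables (T C : finType) (F : cgraph_of T C).
Hypothesis HF : is_cgraph F.
Hypothesis F2 : forall H : cgraph_of T C, H \subset F -> ~ rainbow_even_cycle H.
Implicit Types (x y z a b v w : T) (r s : seq T) (E : {set {set T}}) (G : cgraph_of T C).
Local Notation col := (col F).
Local Notation pth := (pth F).

Lemma no_even a s : uniq (a :: s) -> all (fun e => e \in edges F) (cyc a s) ->
  uniq (map col (cyc a s)) -> ~~ odd (size s).
Proof.
move=> Hu Ha Hc; apply/negP => Hodd.
have Hs : 2 <= size s.
  case: s Hu Ha Hc Hodd => [|y [|z s]] // _ _.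
  by rewrite /cyc /= inE [[set y; a]]setUC eqxx.
set H := [set u in F | u.1 \in cyc a s].
apply: (F2 (H:=H)); first by apply/subsetP => u; rewrite inE => /andP[].
have HE : edges H = [set e | e \in cyc a s].
  apply/setP => e; rewrite inE; apply/edgesP/idP => [[u]|He].
    by rewrite inE => /andP[_ ?] ->.
  have /edgesP[u uF Eu] := allP Ha _ He.
  by exists u; rewrite // inE uF -Eu He.
have Huc : uniq (cyc a s) := map_uniq Hc.
have Hinj : {in H &, injective fst}.
  move=> u u'; rewrite !inE => /andP[uF _] /andP[u'F _]; exact: HF.2.
split.
- exists (a :: s); split => //; rewrite rot1_cons HE; apply/setP => e.
  rewrite inE /cyc pe_zip_cyc; apply/idP/imsetP => [/mapP[p Hp ->]|[p Hp ->]].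
    by exists p.
  by apply: map_f.
- rewrite /rainbow /colors; apply/eqP/imset_injP => u u'; rewrite !inE.
  move=> /andP[uF ue] /andP[u'F u'e] E.
  have E1 : u.1 = u'.1.
    by apply: (uniq_map_inj Hc ue u'e); rewrite !colE // E.
  exact: HF.2.
- have -> : #|H| = #|edges H| by rewrite /edges card_in_imset.
  by rewrite HE cardsE (card_uniqP Huc) /cyc size_pe size_rcons /= Hodd.
Qed.

Lemma cyc_flex0 E x s w : E \subset edges F -> uniq (x :: s) ->
  all (fun e => e \in E) (cyc x s) -> uniq (map col (cyc x s)) -> w \in s ->
  exists r1 r2, [/\ pth E x r1 w, pth E x r2 w, odd (size r1) != odd (size r2),
    {subset r1 <= x :: s} & {subset r2 <= x :: s}].
Proof.
move=> EF Hu Ha Hc Hw.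
have Hev : ~~ odd (size s).
  apply: no_even Hu _ Hc; apply/allP => e He; apply: (subsetP EF); exact: (allP Ha).
case/splitPr: Hw Hu Ha Hc Hev => s1 s2 Hu Ha Hc Hev.
have Ecyc : cyc x (s1 ++ w :: s2) = pe x (rcons s1 w) ++ pe w (rcons s2 x).
  by rewrite /cyc rcons_cat -cat_rcons pe_cat last_rcons.
rewrite Ecyc in Ha Hc.
have P1 : pth E x (rcons s1 w) w.
  split; rewrite ?last_rcons //.
  - by move: Hu; rewrite -cat_cons -cat_rcons cat_uniq => /andP[].
  - by move: Ha; rewrite all_cat => /andP[].
  - by move: Hc; rewrite map_cat cat_uniq => /andP[].
have P2 : pth E w (rcons s2 x) x.
  split; rewrite ?last_rcons //.
  - move: Hu; rewrite -cat_cons cat_uniq => /and3P[_ Hn us2].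
    have xw2 : x \notin w :: s2.
      by apply/negP => Hx; move/hasPn: Hn => /(_ x Hx); rewrite inE eqxx.
    by rewrite -rcons_cons rcons_uniq xw2.
  - by move: Ha; rewrite all_cat => /andP[].
  - by move: Hc; rewrite map_cat cat_uniq => /and3P[].
have P3 := pth_rev P2.
exists (rcons s1 w), (rev (belast w (rcons s2 x))); split => //; last 2 first.
- by move=> v; rewrite mem_rcons !inE mem_cat !inE => /orP[->|->]; rewrite ?orbT.
- move=> v; rewrite mem_rev belast_rcons !inE mem_cat !inE => /orP[->|->]; by rewrite ?orbT.
rewrite size_rev size_belast !size_rcons.
move: Hev; rewrite size_cat /= addnS !oddS oddD.
by case: (odd (size s1)); case: (odd (size s2)).
Qed.

Lemma cyc_flex E a s x w : E \subset edges F -> uniq (a :: s) ->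
  all (fun e => e \in E) (cyc a s) -> uniq (map col (cyc a s)) ->
  x \in a :: s -> w \in a :: s -> x != w ->
  exists r1 r2, [/\ pth E x r1 w, pth E x r2 w, odd (size r1) != odd (size r2),
    {subset r1 <= a :: s} & {subset r2 <= a :: s}].
Proof.
move=> EF Hu Ha Hc Hx Hw xw.
have [p1 [p2 Es]] : exists p1 p2, a :: s = p1 ++ x :: p2.
  by case/splitPr: Hx => p1 p2; exists p1, p2.
case: p1 Es => [|a' p1] /= [Ea Es]; subst a s.
  move: Hw; rewrite inE eq_sym (negbTE xw) /= => Hw.
  exact: (cyc_flex0 EF Hu Ha Hc Hw).
have Hp := cyc_rot a' p1 x p2.
have Hpm : perm_eq (a' :: p1 ++ x :: p2) (x :: p2 ++ a' :: p1).
  by rewrite (perm_catC (a' :: p1) (x :: p2)).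
have [|||||r1 [r2 [P1 P2 Hp12 S1 S2]]] := (cyc_flex0 (E := E) (x := x) (s := p2 ++ a' :: p1) (w := w)) => //.
- by rewrite -(perm_uniq Hpm).
- by rewrite -(perm_all _ Hp).
- by rewrite -(perm_uniq (perm_map col Hp)).
- by move: Hw; rewrite (perm_mem Hpm) inE eq_sym (negbTE xw).
exists r1, r2; split => // v Hv; rewrite (perm_mem Hpm); [exact: S1 | exact: S2].
Qed.

End Cyc.

Lemma cycle_of (T : finType) (x : T) r z q' : uniq (x :: r) -> last x r = z ->
  uniq (z :: rcons q' x) -> {in q', forall v, v \notin x :: r} ->
  uniq (x :: r ++ q') /\ cyc x (r ++ q') = pe x r ++ pe z (rcons q' x).
Proof.
move=> u1 l u2 Hq; split.
  rewrite -cat_cons cat_uniq u1 /=; apply/andP; split.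
    by apply/hasPn => v /Hq.
  by move: u2; rewrite /= mem_rcons rcons_uniq inE => /andP[_ /andP[]].
by rewrite /cyc rcons_cat pe_cat l.
Qed.

Definition qq (T : Type) (r : seq T) := if r is c1 :: cs then rev (belast c1 cs) else [::].

Lemma qq_rev (T : eqType) (s : T) (r : seq T) : r != [::] -> rev (belast s r) = rcons (qq r) s.
Proof. by case: r => [|c r] //= _; rewrite rev_cons. Qed.

Section Theta.
Variables (T C : finType) (F : cgraph_of T C).
Hypothesis HF : is_cgraph F.
Hypothesis F2 : forall H : cgraph_of T C, H \subset F -> ~ rainbow_even_cycle H.
Local Notation col := (col F).
Local Notation pth := (pth F).
Variables (s t : T) (rr : 'I_3 -> seq T).
Hypothesis st : s != t.
Hypothesis Hu : forall k, uniq (s :: rr k).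
Hypothesis Hl : forall k, last s (rr k) = t.
Hypothesis Hd : forall k l, k != l -> forall v, v \in s :: rr k -> v \in s :: rr l -> (v == s) || (v == t).
Hypothesis He : forall k l, k != l -> forall e, e \in pe s (rr k) -> e \notin pe s (rr l).
Hypothesis Hc : forall k, uniq (map col (pe s (rr k))).
Definition Ek k := [set e | e \in pe s (rr k)].
Definition Eall := \bigcup_k Ek k.
Hypothesis EF : Eall \subset edges F.
Implicit Types (x y z v w : T) (k l a b c : 'I_3) (X : {set {set T}}).

Lemma rr_nil k : rr k != [::].
Proof. by apply: contraNneq st => E; move: (Hl k); rewrite E /= => ->. Qed.

Lemma t_in k : t \in rr k.
Proof.
have := mem_last s (rr k); rewrite Hl inE eq_sym (negbTE st) //.
Qed.

Lemma s_notin k : s \notin rr k.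
Proof. by have := Hu k; rewrite /= => /andP[]. Qed.

Lemma Ek_all k : Ek k \subset Eall.
Proof. exact: (bigcup_sup k). Qed.

Lemma pth_k k : pth Eall s (rr k) t.
Proof.
split => //; apply/allP => e He'; apply: (subsetP (Ek_all k)); by rewrite inE.
Qed.

Lemma qq_mem k v : v \in qq (rr k) -> v \in rr k /\ v != t.
Proof.
have Hr := qq_rev s (rr_nil k).
have Hrev : rev (s :: rr k) = t :: rev (belast s (rr k)).
  by rewrite [in LHS]lastI rev_rcons Hl.
have := Hu k; rewrite -rev_uniq Hrev Hr /= => /andP[Ht Hu'].
move=> Hv; split; last by apply: contraNneq Ht => <-; rewrite mem_rcons inE Hv orbT.
have : v \in rev (s :: rr k) by rewrite Hrev Hr !inE mem_rcons inE Hv !orbT.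
rewrite mem_rev inE => /orP[/eqP E|//].
by move: Hu'; rewrite rcons_uniq -E Hv.
Qed.

Lemma Zcyc a c : a != c ->
  uniq (s :: rr a ++ qq (rr c)) /\ cyc s (rr a ++ qq (rr c)) = pe s (rr a) ++ rev (pe s (rr c)).
Proof.
move=> ac.
have Hr := qq_rev s (rr_nil c).
have Hrev : t :: rcons (qq (rr c)) s = rev (s :: rr c).
  by rewrite [in RHS]lastI rev_rcons Hl -Hr.
have Hq : {in qq (rr c), forall v, v \notin s :: rr a}.
  move=> v /qq_mem [vc vt]; apply/negP => va.
  have := Hd ac va (ltac:(by rewrite inE vc orbT)); rewrite (negbTE vt) orbF => /eqP E.
  by move: vc; rewrite E (negbTE (s_notin c)).
have Hu2 : uniq (t :: rcons (qq (rr c)) s) by rewrite Hrev rev_uniq.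
have [U1 E1] := cycle_of (Hu a) (Hl a) Hu2 Hq.
split => //; rewrite E1 -Hr -(Hl c) pe_rev //.
Qed.

Lemma Zmem a c v : (v \in s :: rr a ++ qq (rr c)) = (v \in s :: rr a) || (v \in s :: rr c).
Proof.
rewrite -cat_cons mem_cat; apply/idP/idP.
  by case/orP => [->//|/qq_mem[vc _]]; rewrite !inE vc !orbT.
case/orP => [->//|]; rewrite inE => /orP[/eqP->|vc]; first by rewrite mem_head.
case vt: (v == t); first by move/eqP: vt => ->; rewrite inE t_in orbT.
apply/orP; right; have : v \in rev (s :: rr c) by rewrite mem_rev inE vc orbT.
rewrite [in rev _]lastI rev_rcons Hl qq_rev ?rr_nil // !inE mem_rcons inE vt /= => /orP[/eqP E|//].
by move: vc; rewrite E (negbTE (s_notin c)).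
Qed.

Lemma Zflex a c X x y : a != c -> {in Eall :\: X &, injective col} ->
  (forall e, e \in pe s (rr a) -> e \notin X) -> (forall e, e \in pe s (rr c) -> e \notin X) ->
  (x \in s :: rr a) || (x \in s :: rr c) -> (y \in s :: rr a) || (y \in s :: rr c) -> x != y ->
  exists r1 r2, [/\ pth (Ek a :|: Ek c) x r1 y, pth (Ek a :|: Ek c) x r2 y,
    odd (size r1) != odd (size r2),
    {in r1, forall v, (v \in s :: rr a) || (v \in s :: rr c)} &
    {in r2, forall v, (v \in s :: rr a) || (v \in s :: rr c)}].
Proof.
move=> ac Hinj Xa Xc Hx Hy xy.
have [U1 E1] := Zcyc ac.
have Hall : all (fun e => e \in Ek a :|: Ek c) (cyc s (rr a ++ qq (rr c))).
  by apply/allP => e; rewrite E1 mem_cat mem_rev !inE.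
have Hsub : Ek a :|: Ek c \subset edges F.
  apply: subset_trans EF; apply/subUsetP; split; exact: Ek_all.
have Hdom : forall e, (e \in pe s (rr a)) || (e \in pe s (rr c)) -> e \in Eall :\: X.
  move=> e /orP[H|H]; rewrite inE.
    by rewrite Xa //=; apply: (subsetP (Ek_all a)); rewrite inE H.
  by rewrite Xc //=; apply: (subsetP (Ek_all c)); rewrite inE H.
have Hcol : uniq (map col (cyc s (rr a ++ qq (rr c)))).
  rewrite map_inj_in_uniq.
    rewrite E1 cat_uniq rev_uniq !(pe_uniq (Hu _)) /= andbT; apply/hasPn => e; rewrite mem_rev => ec.
    by apply/negP => ea; move: (He ac ea); rewrite ec.
  move=> e e'; rewrite E1 !mem_cat !mem_rev => H1 H2; apply: Hinj; exact: Hdom.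
have [||r1 [r2 [P1 P2 Hp S1 S2]]] := cyc_flex HF F2 Hsub U1 Hall Hcol (x := x) (w := y) _ _ xy.
- by rewrite Zmem.
- by rewrite Zmem.
exists r1, r2; split => // v Hv; rewrite -Zmem; [exact: S1 | exact: S2].
Qed.

Lemma Ek_disj k l e : k != l -> e \in Ek k -> e \notin Ek l.
Proof. move=> kl; rewrite !inE; exact: (He kl). Qed.

Lemma Mflex a b c (Xb : {set {set T}}) x y : a != b -> a != c -> b != c -> Xb \subset Ek b -> #|Xb| <= 1 ->
  {in Eall :\: Xb &, injective col} ->
  x \in s :: rr a -> x \notin s :: rr c -> y \in s :: rr b -> y \notin s :: rr c ->
  exists r1 r2, [/\ pth Eall x r1 y, pth Eall x r2 y & odd (size r1) != odd (size r2)].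
Proof.
move=> ab ac bc XbS Xb1 Hinj xa xc yb yc.
have tc : t \in s :: rr c by rewrite inE t_in orbT.
have ys : y != s by apply: contraNneq yc => ->; exact: mem_head.
have yt : y != t by apply: contraNneq yc => ->.
have xs : x != s by apply: contraNneq xc => ->; exact: mem_head.
have xt : x != t by apply: contraNneq xc => ->.
have yb' : y \in rr b by move: yb; rewrite inE (negbTE ys).
have [rb1 [rb2 Eb]] : exists rb1 rb2, rr b = rb1 ++ y :: rb2.
  by case/splitPr: yb' => p1 p2; exists p1, p2.
have Pb := pth_k b; rewrite Eb -cat_rcons in Pb.
have S1 := pth_prefix Pb; rewrite last_rcons in S1.
have S2 := pth_suffix Pb; rewrite last_rcons in S2.
have Epe : pe s (rr b) = pe s (rcons rb1 y) ++ pe y rb2.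
  by rewrite Eb -cat_rcons pe_cat last_rcons.
have Upe : uniq (pe s (rr b)) := pe_uniq (Hu b).
have Ubt : uniq (rr b) by have := Hu b => /andP[].
have Hvb : forall v, v \in rr b -> v != s.
  by move=> v vb; apply: contraNneq (s_notin b) => <-.
have [w [tau [Hw Pt Hte Htv]]] : exists w tau, [/\ (w == s) || (w == t), pth Eall w tau y,
    (forall e, e \in pe w tau -> (e \in Ek b) && (e \notin Xb)) &
    (forall v, v \in tau -> [&& v \in rr b, v != s & v != t])].
  case: (boolP (has (mem Xb) (pe s (rcons rb1 y)))) => [/hasP[e0 e0in e0X]|hn].
    have L2 : last y rb2 = t by case: S2.
    exists t, (rev (belast y rb2)); split; first by rewrite eqxx orbT.
    - by have := pth_rev S2.
    - move=> e; rewrite -L2 pe_rev mem_rev => He2.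
      rewrite inE Epe mem_cat He2 orbT /=.
      apply/negP => eX; have E0 : e = e0.
        have e0X' : e0 \in Xb := e0X.
        move: ((card_le1P Xb1) e eX e0); rewrite e0X'.
        by move/esym; rewrite inE => /eqP.
      by move: Upe; rewrite Epe cat_uniq => /and3P[_ /hasP[]]; exists e => //; rewrite E0.
    - have := pth_rev S2; case=> /= /andP[tn _] _ _ _ v vin.
      have vb : v \in rr b.
        rewrite Eb mem_cat; apply/orP; right.
        by move: vin; rewrite mem_rev => /mem_belast.
      rewrite vb Hvb //=; apply: contraNneq tn => <-; exact: vin.
  exists s, (rcons rb1 y); split; first by rewrite eqxx.
  - exact: S1.
  - move=> e He1; rewrite inE Epe mem_cat He1 /=.
    by apply/negP => eX; move/hasP: hn; apply; exists e.
  - move=> v vin.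
    have vb : v \in rr b by rewrite Eb -cat_rcons mem_cat vin.
    rewrite vb Hvb //=; apply/eqP => vt.
    move: Ubt; rewrite Eb -cat_rcons cat_uniq => /and3P[_ /hasP H _]; apply: H.
    exists t; last by rewrite -vt.
    have : last y rb2 \in y :: rb2 := mem_last y rb2.
    case: S2 => _ -> _ _; rewrite inE => /orP[/eqP ty|//].
    by move: yt; rewrite ty eqxx.
have Xa : forall e, e \in pe s (rr a) -> e \notin Xb.
  move=> e ea; apply: contraTN ea => /(subsetP XbS); rewrite inE => eb.
  by apply/negP => ea; move: (He ab ea); rewrite eb.
have Xc : forall e, e \in pe s (rr c) -> e \notin Xb.
  move=> e ec; apply: contraTN ec => /(subsetP XbS); rewrite inE => eb.
  have cb : c != b by rewrite eq_sym.
  by apply/negP => ec; move: (He cb ec); rewrite eb.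
have wZ : (w \in s :: rr a) || (w \in s :: rr c).
  by case/orP: Hw => /eqP->; rewrite ?mem_head // inE t_in orbT.
have xw : x != w by case/orP: Hw => /eqP->.
have xZ : (x \in s :: rr a) || (x \in s :: rr c) by rewrite xa.
have [R1 [R2 [P1 P2 Hp SR1 SR2]]] := Zflex ac Hinj Xa Xc xZ wZ xw.
have EacE : Ek a :|: Ek c \subset Eall by apply/subUsetP; split; exact: Ek_all.
have cat_ok : forall R, pth (Ek a :|: Ek c) x R w ->
    {in R, forall v, (v \in s :: rr a) || (v \in s :: rr c)} -> pth Eall x (R ++ tau) y.
  move=> R PR SR; apply: pth_cat (pth_sub EacE PR) Pt _ _.
    move=> v /Htv /and3P[vb vs vt]; apply/negP => vin.
    have vZ : (v \in s :: rr a) || (v \in s :: rr c).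
      by move: vin; rewrite inE => /orP[/eqP->|/SR//]; rewrite xa.
    have vb' : v \in s :: rr b by rewrite inE vb orbT.
    case/orP: vZ => vZ.
      by have := Hd ab vZ vb'; rewrite (negbTE vs) (negbTE vt).
    have bc' : b != c by [].
    by have := Hd bc' vb' vZ; rewrite (negbTE vs) (negbTE vt).
  move=> e e' eR e'T; case: PR => _ _ /allP aR _.
  have eac := aR e eR; have /andP[e'b e'X] := Hte e' e'T.
  have enb : e \notin Ek b.
    by move: eac; rewrite inE => /orP[] H; apply: (Ek_disj _ H); rewrite // eq_sym.
  have He1 : e \in Eall :\: Xb.
    rewrite inE; apply/andP; split; last exact: (subsetP EacE).
    by apply: contra enb => /(subsetP XbS).
  have He2 : e' \in Eall :\: Xb by rewrite inE e'X; exact: (subsetP (Ek_all b)).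
  apply/eqP => Ecol; have Eee := Hinj e e' He1 He2 Ecol.
  by move: enb; rewrite Eee e'b.
exists (R1 ++ tau), (R2 ++ tau); split.
- exact: (cat_ok R1 P1 SR1).
- exact: (cat_ok R2 P2 SR2).
- by rewrite !size_cat !oddD; move: Hp; case: (odd (size R1)); case: (odd (size R2)); case: (odd (size tau)).
Qed.

Lemma theta_flex a b c (Xa Xb : {set {set T}}) x y : a != b -> a != c -> b != c ->
  Xa \subset Ek a -> #|Xa| <= 1 -> {in Eall :\: Xa &, injective col} ->
  Xb \subset Ek b -> #|Xb| <= 1 -> {in Eall :\: Xb &, injective col} ->
  [|| x \in s :: rr a, x \in s :: rr b | x \in s :: rr c] ->
  [|| y \in s :: rr a, y \in s :: rr b | y \in s :: rr c] -> x != y ->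
  exists r1 r2, [/\ pth Eall x r1 y, pth Eall x r2 y & odd (size r1) != odd (size r2)].
Proof.
move=> ab ac bc XaS Xa1 Ia XbS Xb1 Ib Hx Hy xy.
have notin : forall (X : {set {set T}}) k l e, X \subset Ek k -> k != l -> e \in pe s (rr l) -> e \notin X.
  move=> X k l e XS kl el; apply/negP => /(subsetP XS); rewrite inE => ek.
  by move: (He kl ek); rewrite el.
have cb : c != b by rewrite eq_sym.
have ca : c != a by rewrite eq_sym.
have ba : b != a by rewrite eq_sym.
have Eac : Ek a :|: Ek c \subset Eall by apply/subUsetP; split; exact: Ek_all.
have Ebc : Ek b :|: Ek c \subset Eall by apply/subUsetP; split; exact: Ek_all.
case: (boolP (((x \in s :: rr a) || (x \in s :: rr c)) && ((y \in s :: rr a) || (y \in s :: rr c)))).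
  case/andP => H1 H2.
  have [r1 [r2 [P1 P2 Hp _ _]]] := Zflex ac Ib (fun e => notin _ _ _ e XbS ba)
    (fun e => notin _ _ _ e XbS bc) H1 H2 xy.
  by exists r1, r2; split => //; apply: pth_sub Eac _.
move=> N1.
case: (boolP (((x \in s :: rr b) || (x \in s :: rr c)) && ((y \in s :: rr b) || (y \in s :: rr c)))).
  case/andP => H1 H2.
  have [r1 [r2 [P1 P2 Hp _ _]]] := Zflex bc Ia (fun e => notin _ _ _ e XaS ab)
    (fun e => notin _ _ _ e XaS ac) H1 H2 xy.
  by exists r1, r2; split => //; apply: pth_sub Ebc _.
move=> N2.
have xC : x \notin s :: rr c.
  apply/negP => xc; move: N1 N2; rewrite xc !orbT /= => N1 N2.
  by move: Hy N1 N2; case: (y \in s :: rr a); case: (y \in s :: rr b); case: (y \in s :: rr c).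
have yC : y \notin s :: rr c.
  apply/negP => yc; move: N1 N2; rewrite yc !orbT !andbT => N1 N2.
  by move: Hx N1 N2; case: (x \in s :: rr a); case: (x \in s :: rr b); case: (x \in s :: rr c).
move: N1 N2 Hx Hy; rewrite (negbTE xC) (negbTE yC) !orbF.
case: (boolP (x \in s :: rr a)) => xa; case: (boolP (y \in s :: rr a)) => ya //=.
- by move=> _ _ _ yb; exact: (Mflex ab ac bc XbS Xb1 Ib xa xC yb yC).
- by move=> _ _ xb _; exact: (Mflex ba bc ac XaS Xa1 Ia xb xC ya yC).
- by move=> _ N2 xb yb; move: N2; rewrite xb yb.
Qed.

End Theta.

Lemma ord3_cases (k : 'I_3) : [\/ k = @Ordinal 3 0 isT, k = @Ordinal 3 1 isT | k = @Ordinal 3 2 isT].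
Proof.
case: k => [[|[|[|k]]] Hk] //.
- by constructor 1; apply: val_inj.
- by constructor 2; apply: val_inj.
- by constructor 3; apply: val_inj.
Qed.

Lemma sym3 (R : 'I_3 -> 'I_3 -> Prop) : (forall k l, R k l -> R l k) ->
  R (@Ordinal 3 0 isT) (@Ordinal 3 1 isT) -> R (@Ordinal 3 0 isT) (@Ordinal 3 2 isT) ->
  R (@Ordinal 3 1 isT) (@Ordinal 3 2 isT) -> forall k l, k != l -> R k l.
Proof.
move=> Hs H01 H02 H12 k l.
by case: (ord3_cases k) => ->; case: (ord3_cases l) => -> //; auto.
Qed.

Lemma third3 (a b : 'I_3) : exists c, (c != a) && (c != b).
Proof.
case: (ord3_cases a) => ->; case: (ord3_cases b) => ->;
  by [exists (@Ordinal 3 0 isT) | exists (@Ordinal 3 1 isT) | exists (@Ordinal 3 2 isT)].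
Qed.

Lemma mem_zip2 (A B : eqType) (s : seq A) (t : seq B) a b :
  (a, b) \in zip s t -> a \in s /\ b \in t.
Proof.
elim: s t => [|x s IH] [|y t] //=; rewrite inE => /orP[/eqP[-> ->]|/IH[? ?]].
  by rewrite !inE !eqxx.
by rewrite !inE; split; apply/orP; right.
Qed.

Lemma path_adj (T C : finType) (G : cgraph_of T C) x r :
  path (adj G) x r = all (fun e => e \in edges G) (pe x r).
Proof. by elim: r x => [|y r IH] x //=; rewrite IH. Qed.

Lemma split_first (A : eqType) (p : pred A) (r : seq A) : has p r ->
  exists r1 z r2, [/\ r = r1 ++ z :: r2, p z & all (predC p) r1].
Proof.
elim: r => [|a r IH] //= /orP[pa|/IH[r1 [z [r2 [-> pz ar1]]]]].
  by exists [::], a, r.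
case pa: (p a).
  by exists [::], a, (r1 ++ z :: r2).
by exists (a :: r1), z, r2; rewrite /= pa.
Qed.

Section Main.
Variables (T C : finType) (m : nat) (F : cgraph_of T C) (P : 'I_m -> cgraph_of T C).
Hypothesis HF : is_cgraph F.
Hypothesis Hpart : is_partition F P.
Hypothesis Htype : forall i : 'I_m, [\/ long_rainbow_odd_cycle (P i), bad_piece (P i)
                          | (is_tree (P i) /\ rainbow (P i))].
Hypothesis F1 : forall i j : 'I_m, i != j -> is_tree (P i) -> rainbow (P i) ->
        is_tree (P j) -> rainbow (P j) -> [disjoint verts (P i) & verts (P j)].
Hypothesis F2 : forall H : cgraph_of T C, H \subset F -> ~ rainbow_even_cycle H.
Implicit Types (x y z a b v w : T) (r s q : seq T) (E : {set {set T}}) (G : cgraph_of T C)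
  (i j A : 'I_m) (S : {set 'I_m}).
Local Notation col := (col F).
Local Notation pth := (pth F).

Definition TP i := is_tree (P i) /\ rainbow (P i).

Lemma PF i : P i \subset F.
Proof. by case: Hpart => -> _ _; exact: (bigcup_sup i). Qed.

Lemma CD i j e e' : i != j -> e \in edges (P i) -> e' \in edges (P j) -> col e != col e'.
Proof.
move=> ij /edgesP[u uP ->] /edgesP[u' u'P ->].
have uF := subsetP (PF i) _ uP; have u'F := subsetP (PF j) _ u'P.
rewrite !colE //; apply/eqP => -[E].
case: Hpart => _ _ /(_ i j ij) /disjoint_setI0 /setP /(_ u.2).
have H1 : u.2 \in colors (P i) by apply: imset_f.
have H2 : u.2 \in colors (P j) by rewrite E; apply: imset_f.
by rewrite inE H1 H2 inE.
Qed.

Lemma VV i j v v' : i != j -> v \in verts (P i) -> v \in verts (P j) ->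
  v' \in verts (P i) -> v' \in verts (P j) -> v = v'.
Proof.
move=> ij vi vj v'i v'j; apply/eqP; case: Hpart => _ Hc _; apply: contraTT (Hc i j ij).
move=> vv; rewrite -ltnNge; apply/card_gt1P; exists v, v'; by rewrite !inE vi vj v'i v'j.
Qed.

Definition U S : cgraph_of T C := \bigcup_(i in S) P i.

Lemma UF S : U S \subset F.
Proof. by apply/bigcupsP => i _; exact: PF. Qed.

Lemma vertsU S v : reflect (exists2 i, i \in S & v \in verts (P i)) (v \in verts (U S)).
Proof.
apply: (iffP (vertsP _ v)) => [[u /bigcupP[i iS uP] vu]|[i iS /vertsP[u uP vu]]].
  by exists i => //; apply/vertsP; exists u.
by exists u => //; apply/bigcupP; exists i.
Qed.

Lemma edgesU S e : reflect (exists2 i, i \in S & e \in edges (P i)) (e \in edges (U S)).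
Proof.
apply: (iffP (edgesP _ e)) => [[u /bigcupP[i iS uP] ->]|[i iS /edgesP[u uP ->]]].
  by exists i => //; apply/edgesP; exists u.
by exists u => //; apply/bigcupP; exists i.
Qed.

Lemma edges_part_U i S : i \in S -> edges (P i) \subset edges (U S).
Proof. by move=> iS; apply/subsetP => e He; apply/edgesU; exists i. Qed.

Lemma verts_part_U i S v : i \in S -> v \in verts (P i) -> v \in verts (U S).
Proof. by move=> iS vi; apply/vertsU; exists i. Qed.

Lemma edgesU_mono S S' : S \subset S' -> edges (U S) \subset edges (U S').
Proof.
move=> H; apply/subsetP => e /edgesU[i iS He]; apply/edgesU; exists i => //.
exact: (subsetP H).
Qed.

Lemma EU_F S : edges (U S) \subset edges F.
Proof. exact: edges_sub (UF S). Qed.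

Lemma EP_F i : edges (P i) \subset edges F.
Proof. exact: edges_sub (PF i). Qed.

Lemma edge_vert G e v : e \in edges G -> v \in e -> v \in verts G.
Proof. by move=> He ve; apply/vertsE; exists e. Qed.

Lemma col_SA S A e e' : A \notin S -> e \in edges (U S) -> e' \in edges (P A) ->
  col e != col e'.
Proof.
move=> AS /edgesU[j jS Hj] He'; apply: (CD _ Hj He').
by apply: contraNneq AS => <-.
Qed.

Lemma col_tail S i w r y e e' : pth (edges (U S)) w r y -> {in r, forall v, v \notin verts (P i)} ->
  e \in pe w r -> e' \in edges (P i) -> col e != col e'.
Proof.
case=> _ _ /allP a _ Hr He He'.
have /edgesU[j jS Hj] := a e He.
have [u [b [Eu _ bj]]] := pe_mem He.
apply: (CD _ Hj He'); apply/eqP => ji; subst j.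
have : b \in verts (P i) by apply: (edge_vert Hj); rewrite Eu !inE eqxx orbT.
by rewrite (negbTE (Hr b bj)).
Qed.



Lemma tree_path i x y : TP i -> x \in verts (P i) -> y \in verts (P i) -> x != y ->
  exists r, pth (edges (P i)) x r y.
Proof.
case=> [[_ Hc _] Hr] xP yP _.
case/connectP: (Hc x y xP yP) => p Hp Ey; subst y.
case: (shortenP Hp) => p' Hp' Hu _.
exists p'; split => //; first by rewrite -path_adj.
apply: (uniq_col HF (PF i) (rainbow_inj Hr)); first exact: pe_uniq.
by rewrite -path_adj.
Qed.

Lemma cycle_flex i x y : long_rainbow_odd_cycle (P i) -> x \in verts (P i) -> y \in verts (P i) ->
  x != y -> exists r1 r2, [/\ pth (edges (P i)) x r1 y, pth (edges (P i)) x r2 y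
    & odd (size r1) != odd (size r2)].
Proof.
case=> [[s0 [Hu Hs HE]] Hr _ _] xP yP xy.
case: s0 Hu Hs HE => [|a s] // Hu Hs HE.
have HE' : forall e, (e \in edges (P i)) = (e \in cyc a s).
  move=> e; rewrite HE rot1_cons /cyc pe_zip_cyc.
  apply/imsetP/idP => [[p Hp ->]|/mapP[p Hp ->]]; [exact: map_f | by exists p].
have Hv : forall v, v \in verts (P i) -> v \in a :: s.
  move=> v /vertsE[e]; rewrite HE' => /pe_mem[u [w [-> Hu' Hw]]].
  have Hm : forall z, z \in rcons s a -> z \in a :: s by move=> z; rewrite mem_rcons.
  rewrite !inE => /orP[]/eqP->; last exact: Hm.
  by move: Hu'; rewrite inE => /orP[/eqP->|/Hm //]; exact: mem_head.
have Ha : all (fun e => e \in edges (P i)) (cyc a s) by apply/allP => e; rewrite HE'.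
have [r1 [r2 [P1 P2 Hp _ _]]] := cyc_flex HF F2 (EP_F i) Hu Ha
   (uniq_col HF (PF i) (rainbow_inj Hr) (uniq_cyc Hu (Hs : 2 <= size s)) Ha) (Hv _ xP) (Hv _ yP) xy.
by exists r1, r2.
Qed.

Lemma cover3 (a b c k : 'I_3) : a != b -> a != c -> b != c -> [|| k == a, k == b | k == c].
Proof.
by case: (ord3_cases a) => ->; case: (ord3_cases b) => ->; case: (ord3_cases c) => ->;
  case: (ord3_cases k) => ->.
Qed.

Lemma path_st_seq G a b : is_path_st G a b ->
  exists r, [/\ uniq (a :: r), last a r = b & edges G = [set e | e \in pe a r]].
Proof.
case=> [[|a' r] [Hu Hs Hh Hl HE]] //; simpl in Hh; subst a'.
exists r; split => //; rewrite HE; apply/setP => e; rewrite inE /= pe_zip.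
by apply/imsetP/mapP => -[p Hp ->]; exists p.
Qed.

Lemma almost_inj G u u' : almost_rainbow G -> u \in G -> u' \in G -> u != u' -> u.2 = u'.2 ->
  {in G :\ u' &, injective snd}.
Proof.
move=> Ha uG u'G uu' E; apply/imset_injP.
have Hsub : snd @: G \subset snd @: (G :\ u').
  apply/subsetP => c /imsetP[w wG ->]; case: (eqVneq w u') => [->|wu'].
    by rewrite -E; apply: imset_f; rewrite !inE uu' uG.
  by apply: imset_f; rewrite !inE wu' wG.
have H2 : #|G :\ u'| = #|G| - 1 by rewrite (cardsD1 u' G) u'G add1n subSS subn0.
rewrite eqn_leq leq_imset_card /= H2 -Ha; exact: subset_leq_card Hsub.
Qed.

Lemma bad_flex i x y : bad_piece (P i) -> x \in verts (P i) -> y \in verts (P i) -> x != y ->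
  exists r1 r2, [/\ pth (edges (P i)) x r1 y, pth (edges (P i)) x r2 y
    & odd (size r1) != odd (size r2)].
Proof.
move=> HB xP yP xy.
case: HB => Har _ [Q1 [Q2 [Q3 [s [t [Hth EB R1 R2 R3]]]]]].
case: Hth => [[st H1] H2 H3 [V12 V13 V23] [D12 D13 D23]].
have [r1 [U1 L1 E1]] := path_st_seq H1.
have [r2 [U2 L2 E2]] := path_st_seq H2.
have [r3 [U3 L3 E3]] := path_st_seq H3.
pose QQ := fun k : 'I_3 => nth set0 [:: Q1; Q2; Q3] k.
pose rr := fun k : 'I_3 => nth [::] [:: r1; r2; r3] k.
have Q1P : Q1 \subset P i by rewrite EB; apply: subset_trans (subsetUl _ _) (subsetUl _ _).
have Q2P : Q2 \subset P i by rewrite EB; apply: subset_trans (subsetUr _ _) (subsetUl _ _).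
have Q3P : Q3 \subset P i by rewrite EB; apply: subsetUr.
have Hk : forall k, [/\ uniq (s :: rr k), last s (rr k) = t,
    edges (QQ k) = [set e | e \in pe s (rr k)], rainbow (QQ k) & QQ k \subset P i].
  by move=> k; case: (ord3_cases k) => ->; rewrite /QQ /rr /=; split.
have Hu k : uniq (s :: rr k) by case: (Hk k).
have Hl k : last s (rr k) = t by case: (Hk k).
have Hnil k : rr k != [::] by apply: contraNneq st => E; move: (Hl k); rewrite E /= => ->.
have Hvk : forall k v, v \in s :: rr k -> v \in verts (QQ k).
  move=> k v Hv; have [e He' ve] := pe_vert Hv (Hnil k).
  by apply/vertsE; exists e => //; case: (Hk k) => _ _ -> _ _; rewrite inE.
have Hd : forall k l, k != l -> forall v, v \in s :: rr k -> v \in s :: rr l -> (v == s) || (v == t).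
  apply: sym3.
  - by move=> k l H v H1' H2'; apply: H.
  - by move=> v /(Hvk _) H1' /(Hvk _) H2'; have := subsetP V12 v; rewrite !inE H1' H2' => /(_ isT).
  - by move=> v /(Hvk _) H1' /(Hvk _) H2'; have := subsetP V13 v; rewrite !inE H1' H2' => /(_ isT).
  - by move=> v /(Hvk _) H1' /(Hvk _) H2'; have := subsetP V23 v; rewrite !inE H1' H2' => /(_ isT).
have He : forall k l, k != l -> forall e, e \in pe s (rr k) -> e \notin pe s (rr l).
  apply: sym3.
  - by move=> k l H e el; apply/negP => ek; move: (H e ek); rewrite el.
  - move=> e; rewrite /= => H; have : e \in edges Q1 by rewrite E1 inE.
    by move/(disjointFr D12); rewrite E2 inE => ->.
  - move=> e; rewrite /= => H; have : e \in edges Q1 by rewrite E1 inE.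
    by move/(disjointFr D13); rewrite E3 inE => ->.
  - move=> e; rewrite /= => H; have : e \in edges Q2 by rewrite E2 inE.
    by move/(disjointFr D23); rewrite E3 inE => ->.
have Hc : forall k, uniq (map col (pe s (rr k))).
  move=> k; case: (Hk k) => _ _ Ek Rk Sk.
  apply: (uniq_col HF (subset_trans Sk (PF i)) (rainbow_inj Rk)); first exact: pe_uniq.
  by apply/allP => e He'; rewrite Ek inE.
have HEP : Eall s rr \subset edges (P i).
  apply/bigcupsP => k _; rewrite /Ek; case: (Hk k) => _ _ <- _ Sk; exact: edges_sub Sk.
have EF : Eall s rr \subset edges F := subset_trans HEP (EP_F i).
have Hcov : forall v, v \in verts (P i) -> exists k, v \in s :: rr k.
  move=> v /vertsP[u]; rewrite EB !inE => /orP[/orP[]|] uQ vu.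
  - have : u.1 \in edges Q1 := imset_f _ uQ.
    rewrite E1 inE => /pe_mem[a' [b' [Eu Ha Hb]]]; exists (@Ordinal 3 0 isT) => /=.
    by move: vu; rewrite Eu !inE => /orP[]/eqP->; [move: Ha; rewrite inE | rewrite Hb orbT].
  - have : u.1 \in edges Q2 := imset_f _ uQ.
    rewrite E2 inE => /pe_mem[a' [b' [Eu Ha Hb]]]; exists (@Ordinal 3 1 isT) => /=.
    by move: vu; rewrite Eu !inE => /orP[]/eqP->; [move: Ha; rewrite inE | rewrite Hb orbT].
  - have : u.1 \in edges Q3 := imset_f _ uQ.
    rewrite E3 inE => /pe_mem[a' [b' [Eu Ha Hb]]]; exists (@Ordinal 3 2 isT) => /=.
    by move: vu; rewrite Eu !inE => /orP[]/eqP->; [move: Ha; rewrite inE | rewrite Hb orbT].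
have TF := theta_flex HF F2 st Hu Hl Hd He Hc EF.
have Hx3 : forall (a b c : 'I_3) v, a != b -> a != c -> b != c -> v \in verts (P i) ->
    [|| v \in s :: rr a, v \in s :: rr b | v \in s :: rr c].
  move=> a b c v ab ac bc /Hcov[k Hk'].
  by case/or3P: (cover3 k ab ac bc) => /eqP E; subst k; rewrite Hk' ?orbT.
have IJ : forall (G : cgraph_of T C) (X : {set {set T}}), G \subset P i ->
    {in G &, injective snd} -> (forall w : {set T} * C, w \in P i -> w.1 \notin X -> w \in G) ->
    {in Eall s rr :\: X &, injective col}.
  move=> G X GP Gi Hw e e' /setDP[eE eX] /setDP[e'E e'X].
  have /edgesP[w wP Ew] := subsetP HEP _ eE; have /edgesP[w' w'P Ew'] := subsetP HEP _ e'E.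
  subst e e'; apply: (col_inj HF (subset_trans GP (PF i)) Gi); apply: imset_f; exact: Hw.
have HQ : forall u, u \in P i -> exists k, u \in QQ k.
  move=> u; rewrite EB !inE => /orP[/orP[]|] uQ;
    by [exists (@Ordinal 3 0 isT) | exists (@Ordinal 3 1 isT) | exists (@Ordinal 3 2 isT)].
have HXk : forall k u, u \in QQ k -> [set u.1] \subset Ek s rr k.
  move=> k u uQ; rewrite sub1set /Ek; case: (Hk k) => _ _ <- _ _; exact: imset_f.
case: (boolP [exists u, exists u', [&& u \in P i, u' \in P i, u != u' & u.2 == u'.2]]).
  move/existsP => [u /existsP[u' /and4P[uB u'B uu' /eqP E]]].
  have [ka uka] := HQ u uB; have [kb ukb] := HQ u' u'B.
  have kab : ka != kb.
    apply/eqP => Ek'; subst kb; case: (Hk ka) => _ _ _ Rk _.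
    by move: uu'; rewrite (rainbow_inj Rk uka ukb E) eqxx.
  have [c /andP[cka ckb]] := third3 ka kb.
  have u'u : u' != u by rewrite eq_sym.
  have Ia : {in Eall s rr :\: [set u.1] &, injective col}.
    apply: (IJ _ _ (subsetDl _ _) (almost_inj Har u'B uB u'u (esym E))).
    move=> w wP; rewrite inE => wn; rewrite !inE wP andbT; apply: contraNneq wn => ->; exact: eqxx.
  have Ib : {in Eall s rr :\: [set u'.1] &, injective col}.
    apply: (IJ _ _ (subsetDl _ _) (almost_inj Har uB u'B uu' E)).
    move=> w wP; rewrite inE => wn; rewrite !inE wP andbT; apply: contraNneq wn => ->; exact: eqxx.
  have kac : ka != c by rewrite eq_sym.
  have kbc : kb != c by rewrite eq_sym.
  have [r1' [r2' [P1 P2 Hp]]] := TF ka kb c _ _ x y kab kac kbc (HXk _ _ uka) (ltac:(by rewrite cards1))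
    Ia (HXk _ _ ukb) (ltac:(by rewrite cards1)) Ib (Hx3 _ _ _ _ kab kac kbc xP) (Hx3 _ _ _ _ kab kac kbc yP) xy.
  by exists r1', r2'; split => //; apply: pth_sub HEP _.
move/existsPn => Hn.
have Iall : {in P i &, injective snd}.
  move=> u u' uB u'B E; apply/eqP; apply: contraTT (Hn u) => uu'.
  by rewrite negbK; apply/existsP; exists u'; rewrite uB u'B uu' E eqxx.
have I0 : {in Eall s rr :\: set0 &, injective col}.
  by apply: (IJ _ _ (subxx _) Iall) => w wP _.
have o01 : @Ordinal 3 0 isT != @Ordinal 3 1 isT by [].
have o02 : @Ordinal 3 0 isT != @Ordinal 3 2 isT by [].
have o12 : @Ordinal 3 1 isT != @Ordinal 3 2 isT by [].
have [r1' [r2' [P1 P2 Hp]]] := TF _ _ _ set0 set0 x y o01 o02 o12 (sub0set _) (ltac:(by rewrite cards0))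
  I0 (sub0set _) (ltac:(by rewrite cards0)) I0 (Hx3 _ _ _ _ o01 o02 o12 xP) (Hx3 _ _ _ _ o01 o02 o12 yP) xy.
by exists r1', r2'; split => //; apply: pth_sub HEP _.
Qed.

Lemma part_flex i x y : ~ TP i -> x \in verts (P i) -> y \in verts (P i) -> x != y ->
  exists r1 r2, [/\ pth (edges (P i)) x r1 y, pth (edges (P i)) x r2 y
    & odd (size r1) != odd (size r2)].
Proof.
move=> Hn xP yP xy; case: (Htype i) => [H|H|H]; first exact: cycle_flex.
  exact: bad_flex.
by case: Hn.
Qed.

Lemma part_path i x y : x \in verts (P i) -> y \in verts (P i) -> x != y ->
  exists r, pth (edges (P i)) x r y.
Proof.
move=> xP yP xy; case: (Htype i) => [H|H|H].
- by have [r1 [r2 [P1 _ _]]] := cycle_flex H xP yP xy; exists r1.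
- by have [r1 [r2 [P1 _ _]]] := bad_flex H xP yP xy; exists r1.
- exact: tree_path.
Qed.

Lemma pth_nil E x : pth E x [::] x.
Proof. by split. Qed.

Lemma two_paths x r z q : pth (edges F) x r z -> pth (edges F) z q x -> x != z ->
  {in q, forall v, v != x -> v \notin r} ->
  {in pe x r & pe z q, forall e e', col e != col e'} -> odd (size r + size q).
Proof.
move=> P1 P2 xz Hq Hc.
case: (lastP q) P2 Hq Hc => [|q' x'].
  by case=> _ /= E _ _; move: xz; rewrite E eqxx.
move=> P2 Hq Hc.
have Ex : x' = x by case: P2 => _; rewrite last_rcons.
subst x'.
case: P1 => u1 l1 a1 c1; case: (P2) => u2 _ a2 c2.
have Hq' : {in q', forall v, v \notin x :: r}.
  move=> v vq; have vx : v != x.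
    apply/eqP => Evx; move: u2 vq; rewrite Evx /= rcons_uniq => /andP[_ /andP[xq _]] xq'; by rewrite xq' in xq.
  rewrite inE negb_or vx /=; apply: Hq vx; by rewrite mem_rcons inE vq orbT.
have [U E] := cycle_of u1 l1 u2 Hq'.
have := no_even HF F2 U; rewrite E all_cat a1 a2 => /(_ isT).
rewrite map_cat cat_uniq c1 c2 /= andbT.
have -> : ~~ has (mem (map col (pe x r))) (map col (pe z (rcons q' x))).
  apply/hasPn => c /mapP[e' He' ->]; apply/mapP => -[e He /eqP]; rewrite eq_sym.
  by apply/negP; exact: Hc.
move=> /(_ isT); rewrite size_cat size_rcons addnS /=.
by case: (odd (size r + size q')).
Qed.

Definition Inv S :=
 (forall x y, x \in verts (U S) -> y \in verts (U S) -> x != y ->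
    exists r, pth (edges (U S)) x r y) /\
 (forall x y, x \in verts (U S) -> y \in verts (U S) -> x != y ->
   (forall i, i \in S -> x \in verts (P i) -> ~ TP i) ->
   exists i w r, [/\ i \in S, x \in verts (P i), (w \in verts (P i)) && (w != x),
     pth (edges (U S)) w r y & {in r, forall v, v \notin verts (P i)}]).

Lemma Inv1 A : Inv [set A].
Proof.
have HV : forall v, v \in verts (U [set A]) -> v \in verts (P A).
  by move=> v /vertsU[i]; rewrite inE => /eqP->.
have HE := edges_part_U (set11 A).
split.
  move=> x y /HV xP /HV yP xy; have [r Pr] := part_path xP yP xy.
  by exists r; exact: pth_sub HE Pr.
move=> x y /HV xP /HV yP xy Hn.
exists A, y, [::]; split; [exact: set11 | done | by rewrite yP eq_sym xy | exact: pth_nil | done].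
Qed.

Lemma Inv_add S A v : Inv S -> A \notin S -> v \in verts (P A) -> v \in verts (U S) ->
  (forall u, u \in verts (P A) -> u \in verts (U S) -> u = v) -> Inv (A |: S).
Proof.
move=> [IHa IHb] AS vA vS Huniq.
set S' := A |: S.
have AS' : A \in S' by rewrite !inE eqxx.
have SS' : S \subset S' by apply: subsetUr.
have HEA : edges (P A) \subset edges (U S') := edges_part_U AS'.
have HES : edges (U S) \subset edges (U S') := edgesU_mono SS'.
have HV : forall u, u \in verts (U S') -> (u \in verts (P A)) || (u \in verts (U S)).
  move=> u /vertsU[i]; rewrite !inE => /orP[/eqP->->//|iS ui].
  by rewrite (verts_part_U iS ui) orbT.
have HVA : forall u, u \in verts (P A) -> u \in verts (U S') by move=> u; apply: verts_part_U.
have HVS : forall u, u \in verts (U S) -> u \in verts (U S').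
  by move=> u /vertsU[i iS ui]; apply: (verts_part_U (subsetP SS' _ iS)).
have Hmix : forall x y, x \in verts (U S) -> y \in verts (P A) -> x != y ->
    exists r, pth (edges (U S')) x r y.
  move=> x y xS yA xy.
  case: (eqVneq x v) => [Exv|xv].
    by subst x; have [r Pr] := part_path vA yA xy; exists r; apply: pth_sub HEA Pr.
  have [r1 P1] := IHa x v xS vS xv.
  case: (eqVneq v y) => [<-|vy]; first by exists r1; apply: pth_sub HES P1.
  have [r2 P2] := part_path vA yA vy.
  exists (r1 ++ r2); apply: pth_cat (pth_sub HES P1) (pth_sub HEA P2) _ _.
    move=> u ur2; apply/negP => uin.
    have uA : u \in verts (P A) by case: (pth_verts P2) => H _; exact: H.
    have uS : u \in verts (U S).
      move: uin; rewrite inE => /orP[/eqP->//|ur1]; by case: (pth_verts P1) => H _; exact: H.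
    have := Huniq u uA uS => Euv; case: P2 => /= /andP[vr2 _] _ _ _.
    by move: vr2; rewrite -Euv ur2.
  move=> e e' He1 He2; apply: (col_SA AS).
    by case: P1 => _ _ /allP H _; exact: H.
  by case: P2 => _ _ /allP H _; exact: H.
split.
  move=> x y /HV Hx /HV Hy xy.
  case: (boolP (x \in verts (P A))) => xA; case: (boolP (y \in verts (P A))) => yA.
  - by have [r Pr] := part_path xA yA xy; exists r; apply: pth_sub HEA Pr.
  - move: Hy; rewrite (negbTE yA) /= => yS.
    have [r Pr] := Hmix y x yS xA (ltac:(by rewrite eq_sym)).
    by exists (rev (belast y r)); exact: pth_rev Pr.
  - move: Hx; rewrite (negbTE xA) /= => xS; exact: Hmix.
  - move: Hx Hy; rewrite (negbTE xA) (negbTE yA) /= => xS yS.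
    by have [r Pr] := IHa x y xS yS xy; exists r; apply: pth_sub HES Pr.
move=> x y /HV Hx /HV Hy xy Hn.
have HnS : forall i, i \in S -> x \in verts (P i) -> ~ TP i.
  move=> i iS; apply: Hn; exact: (subsetP SS').
case: (boolP (x \in verts (P A))) => xA.
  have nTA : ~ TP A by apply: Hn.
  case: (boolP (y \in verts (P A))) => yA.
    by exists A, y, [::]; split; [exact: AS' | done | rewrite yA eq_sym xy | exact: pth_nil | done].
  move: Hy; rewrite (negbTE yA) /= => yS.
  case: (boolP (x \in verts (U S))) => xS.
    have [i [w [r [iS xi /andP[wi wx] Pr Hr]]]] := IHb x y xS yS xy HnS.
    by exists i, w, r; split; [exact: (subsetP SS') | done | rewrite wi wx | exact: pth_sub HES Pr | done].
  have vx : v != x by apply: contraNneq xS => <-.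
  case: (eqVneq v y) => [<-|vy].
    by exists A, v, [::]; split; [exact: AS' | done | rewrite vA vx | exact: pth_nil | done].
  have [r Pr] := IHa v y vS yS vy.
  exists A, v, r; split; [exact: AS' | done | by rewrite vA vx | exact: pth_sub HES Pr | ].
  move=> u ur; apply/negP => uA.
  have uS : u \in verts (U S) by case: (pth_verts Pr) => H _; exact: H.
  have := Huniq u uA uS => Euv; case: Pr => /= /andP[vr _] _ _ _.
  by move: vr; rewrite -Euv ur.
move: Hx; rewrite (negbTE xA) /= => xS.
case: (boolP (y \in verts (U S))) => yS.
  have [i [w [r [iS xi /andP[wi wx] Pr Hr]]]] := IHb x y xS yS xy HnS.
  by exists i, w, r; split; [exact: (subsetP SS') | done | rewrite wi wx | exact: pth_sub HES Pr | done].
move: Hy; rewrite (negbTE yS) orbF => yA.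
have xv : x != v by apply: contraNneq xA => ->.
have [i [w [r [iS xi /andP[wi wx] Pr Hr]]]] := IHb x v xS vS xv HnS.
have yv : v != y by apply: contraNneq yS => <-.
have [q Pq] := part_path vA yA yv.
have qA : {in q, forall u, u \in verts (P A)} by case: (pth_verts Pq) => H _.
have qv : {in q, forall u, u != v}.
  by move=> u uq; case: Pq => /= /andP[vq _] _ _ _; apply: contraNneq vq => <-.
have wS : {in w :: r, forall u, u \in verts (U S)}.
  move=> u; rewrite inE => /orP[/eqP->|ur]; first exact: (verts_part_U iS wi).
  by case: (pth_verts Pr) => H _; exact: H.
exists i, w, (r ++ q); split; [exact: (subsetP SS') | done | by rewrite wi wx | | ].
  apply: pth_cat (pth_sub HES Pr) (pth_sub HEA Pq) _ _.
    move=> u uq; apply/negP => uin.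
    by move: (qv u uq); rewrite (Huniq u (qA u uq) (wS u uin)) eqxx.
  move=> e e' He1 He2; apply: (col_SA AS).
    by case: Pr => _ _ /allP H _; exact: H.
  by case: Pq => _ _ /allP H _; exact: H.
move=> u; rewrite mem_cat => /orP[/Hr//|uq]; apply/negP => ui.
by move: (qv u uq); rewrite (Huniq u (qA u uq) (verts_part_U iS ui)) eqxx.
Qed.

Lemma par2 (a b1 b2 : nat) : odd b1 != odd b2 -> ~~ odd (b1 + a) || ~~ odd (b2 + a).
Proof. by rewrite !oddD; case: (odd a); case: (odd b1); case: (odd b2). Qed.

Lemma key S A x y : Inv S -> A \notin S -> x \in verts (P A) -> x \in verts (U S) ->
  y \in verts (P A) -> y \in verts (U S) -> x != y -> False.
Proof.
move=> [IHa IHb] AS xA xS yA yS xy.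
have HEF : edges (U S) \subset edges F := EU_F S.
have [FlexA|TA] : (forall u w, u \in verts (P A) -> w \in verts (P A) -> u != w ->
    exists r1 r2, [/\ pth (edges (P A)) u r1 w, pth (edges (P A)) u r2 w
      & odd (size r1) != odd (size r2)]) \/ TP A.
  case: (Htype A) => H; [left => u w uA wA uw; exact: cycle_flex
    | left => u w uA wA uw; exact: bad_flex | by right].
  have [r Pr] := IHa x y xS yS xy.
  have yr : y \in r.
    case: (Pr) => _ l _ _; have := mem_last x r; rewrite l inE eq_sym (negbTE xy) //.
  have [r1 [z [r2 [Er zA Hr1]]]] := split_first (p := fun u => u \in verts (P A)) (r := r)
    (ltac:(by apply/hasP; exists y)).
  rewrite Er -cat_rcons in Pr.
  have PQ := pth_prefix Pr; rewrite last_rcons in PQ.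
  have zx : z != x.
    case: (Pr) => /= /andP[xn _] _ _ _; apply: contraNneq xn => <-.
    by rewrite mem_cat mem_rcons inE eqxx.
  have [R1 [R2 [PR1 PR2 Hp]]] := FlexA z x zA xA zx.
  have fin : forall R, pth (edges (P A)) z R x -> ~~ odd (size R + size (rcons r1 z)) -> False.
    move=> R PR Hev.
    have Hq : {in R, forall v, v != x -> v \notin rcons r1 z}.
      move=> v vR _; have vA : v \in verts (P A) by case: (pth_verts PR) => H _; exact: H.
      have vz : v != z by case: (PR) => /= /andP[zR _] _ _ _; apply: contraNneq zR => <-.
      rewrite mem_rcons inE (negbTE vz) /=; apply/negP => vr1.
      by move/allP: Hr1 => /(_ v vr1); rewrite /= vA.
    have Hc : {in pe x (rcons r1 z) & pe z R, forall e e', col e != col e'}.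
      move=> e e' He1 He2; apply: (col_SA AS).
        by case: PQ => _ _ /allP H _; exact: H.
      by case: PR => _ _ /allP H _; exact: H.
    have := two_paths (pth_sub HEF PQ) (pth_sub (EP_F A) PR) (ltac:(by rewrite eq_sym)) Hq Hc.
    by rewrite addnC (negbTE Hev).
  by case/orP: (par2 (size (rcons r1 z)) Hp) => H; [exact: fin R1 PR1 H | exact: fin R2 PR2 H].
have HnS : forall i, i \in S -> x \in verts (P i) -> ~ TP i.
  move=> i iS xi [Ti Ri]; have iA : i != A by apply: contraNneq AS => <-.
  have := F1 iA Ti Ri TA.1 TA.2 => D.
  by move: (disjointFr D xi); rewrite xA.
have [i [w [r [iS xi /andP[wi wx] Pr Hr]]]] := IHb x y xS yS xy HnS.
have iA : i != A by apply: contraNneq AS => <-.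
have wA : w \notin verts (P A).
  by apply/negP => wA; move: wx; rewrite (VV iA wi wA xi xA) eqxx.
have yr : y \in r.
  case: (Pr) => _ l _ _; have := mem_last w r; rewrite l inE => /orP[/eqP E|//].
  by move: wA; rewrite -E yA.
have [r1 [z [r2 [Er zA Hr1]]]] := split_first (p := fun u => u \in verts (P A)) (r := r)
  (ltac:(by apply/hasP; exists y)).
have Pr' := Pr; rewrite Er -cat_rcons in Pr'.
have PT := pth_prefix Pr'; rewrite last_rcons in PT.
have Hsub : {subset rcons r1 z <= r} by move=> u; rewrite Er -cat_rcons mem_cat => ->.
have Hpe : {subset pe w (rcons r1 z) <= pe w r}.
  by move=> e; rewrite Er -cat_rcons pe_cat mem_cat => ->.
have [R1 [R2 [PR1 PR2 Hp]]] := part_flex (HnS i iS xi) xi wi (ltac:(by rewrite eq_sym)).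
have zx : z != x.
  apply/eqP => E; have := Hr z; rewrite Er mem_cat inE eqxx orbT => /(_ isT).
  by rewrite E xi.
have [q Pq] := part_path zA xA zx.
have mk : forall R, pth (edges (P i)) x R w -> pth (edges (U S)) x (R ++ rcons r1 z) z.
  move=> R PR; apply: pth_cat (pth_sub (edges_part_U iS) PR) PT _ _.
    move=> u /Hsub ur; apply/negP; rewrite inE => /orP[/eqP Eux|uR].
      by move: (Hr u ur); rewrite Eux xi.
    have : u \in verts (P i) by case: (pth_verts PR) => H _; exact: H.
    by move: (Hr u ur) => /negbTE ->.
  move=> e e' He1 He2; rewrite eq_sym; apply: (col_tail Pr Hr (Hpe _ He2)).
  by case: PR => _ _ /allP H _; exact: H.
have fin : forall R, pth (edges (P i)) x R w -> ~~ odd (size R + (size (rcons r1 z) + size q)) -> False.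
  move=> R PR Hev.
  have Hq : {in q, forall v, v != x -> v \notin R ++ rcons r1 z}.
    move=> v vq vx; have vA : v \in verts (P A) by case: (pth_verts Pq) => H _; exact: H.
    have vz : v != z by case: (Pq) => /= /andP[zq _] _ _ _; apply: contraNneq zq => <-.
    rewrite mem_cat mem_rcons inE (negbTE vz) /= negb_or; apply/andP; split.
      apply/negP => vR; have vi : v \in verts (P i) by case: (pth_verts PR) => H _; exact: H.
      by move: vx; rewrite (VV iA vi vA xi xA) eqxx.
    by apply/negP => vr1; move/allP: Hr1 => /(_ v vr1); rewrite /= vA.
  have Hc : {in pe x (R ++ rcons r1 z) & pe z q, forall e e', col e != col e'}.
    move=> e e' He1 He2; apply: (col_SA AS).
      by case: (mk R PR) => _ _ /allP H _; exact: H.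
    by case: Pq => _ _ /allP H _; exact: H.
  have := two_paths (pth_sub HEF (mk R PR)) (pth_sub (EP_F A) Pq) (ltac:(by rewrite eq_sym)) Hq Hc.
  by rewrite size_cat -addnA (negbTE Hev).
by case/orP: (par2 (size (rcons r1 z) + size q) Hp) => H; [exact: fin R1 PR1 H | exact: fin R2 PR2 H].
Qed.

Definition good (D : seq 'I_m) := forall D1 A D2, D = D1 ++ A :: D2 ->
  #|verts (U [set i in D1]) :&: verts (P A)| <= 1.

Lemma good_rcons D A : good D -> #|verts (U [set i in D]) :&: verts (P A)| <= 1 ->
  good (rcons D A).
Proof.
move=> gD H D1 A' D2; case: (lastP D2) => [|D2' a] E.
  by move: E; rewrite cats1 => /rcons_inj [ED EA]; subst D A.
move: E; rewrite -rcons_cons -rcons_cat => /rcons_inj [E _]; exact: gD E.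
Qed.

Lemma Inv0 : Inv set0.
Proof.
have H : forall v, v \in verts (U set0) -> False by move=> v /vertsU[i]; rewrite inE.
by split => x y /H.
Qed.

Lemma card_rest D A : A \notin D ->
  #|[set i | i \notin rcons D A]| = #|[set i | i \notin D]| - 1.
Proof.
move=> AD; rewrite (cardsD1 A [set i | i \notin D]) inE AD add1n subSS subn0.
apply: eq_card => i; rewrite !inE mem_rcons inE negb_or.
by case: (i == A).
Qed.

Lemma build n : forall D S, #|[set i | i \notin D]| = n -> uniq D -> good D ->
  S \subset [set i in D] -> Inv S ->
  (forall i, i \notin D -> forall v, v \in verts (P i) -> v \in verts (U [set j in D]) ->
     v \in verts (U S)) ->
  exists D', [/\ uniq D', good D' & forall i, i \in D'].
Proof.
elim: n => [|n IH] D S Hn uD gD SD IS Hrem.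
  exists D; split => // i; move/cards0_eq/setP/(_ i): Hn; rewrite !inE.
  by case: (i \in D).
have Hcard : forall A, A \notin D -> #|[set i | i \notin rcons D A]| = n.
  by move=> A AD; rewrite card_rest // Hn subSS subn0.
have HrD : forall A i v, i \notin rcons D A -> v \in verts (P i) ->
    v \in verts (U [set j in rcons D A]) -> v \in verts (P A) \/ v \in verts (U S).
  move=> A i v; rewrite mem_rcons inE negb_or => /andP[_ iD] vi /vertsU[j].
  rewrite inE mem_rcons inE => /orP[/eqP->|jD] vj; first by left.
  by right; apply: (Hrem i iD v vi); apply/vertsU; exists j; rewrite ?inE.
have Hsubv : forall A, A \notin D ->
    verts (U [set i in D]) :&: verts (P A) \subset verts (P A) :&: verts (U S).
  move=> A AD; apply/subsetP => v; rewrite !inE => /andP[vD vA].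
  by rewrite vA (Hrem A AD v vA vD).
case: (pickP (fun A => (A \notin D) && (#|verts (P A) :&: verts (U S)| == 1))) => [A /andP[AD /cards1P[v Ev]]|N1].
  have vA : v \in verts (P A) by have := set11 v; rewrite -Ev inE => /andP[].
  have vS : v \in verts (U S) by have := set11 v; rewrite -Ev inE => /andP[].
  have Hu : forall u, u \in verts (P A) -> u \in verts (U S) -> u = v.
    by move=> u uA uS; apply/set1P; rewrite -Ev inE uA uS.
  apply: (IH (rcons D A) (A |: S)).
  - exact: Hcard.
  - by rewrite rcons_uniq AD.
  - apply: good_rcons gD _; apply: leq_trans (subset_leq_card (Hsubv A AD)) _.
    by rewrite Ev cards1.
  - apply/subsetP => i; rewrite !inE mem_rcons inE => /orP[->//|iS].
    by have := subsetP SD i iS; rewrite inE => ->; rewrite orbT.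
  - have AS : A \notin S by apply: contra AD => /(subsetP SD); rewrite inE.
    exact: (Inv_add IS AS vA vS Hu).
  - move=> i iD v' vi vD; case: (HrD A i v' iD vi vD) => H.
      by apply: verts_part_U H; rewrite !inE eqxx.
    by case/vertsU: H => j jS vj; apply: (verts_part_U _ vj); rewrite !inE jS orbT.
case: (pickP (fun A => (A \notin D) && (1 < #|verts (P A) :&: verts (U S)|))) => [A /andP[AD /card_gt1P[x [y [Hx Hy xy]]]]|N2].
  move: Hx Hy; rewrite !inE => /andP[xA xS] /andP[yA yS].
  have AS : A \notin S by apply: contra AD => /(subsetP SD); rewrite inE.
  by case: (key IS AS xA xS yA yS xy).
have N0 : forall A, A \notin D -> verts (P A) :&: verts (U S) = set0.
  move=> A AD; apply: cards0_eq; move: (N1 A) (N2 A); rewrite AD /=.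
  by case: #|_| => [|[|k]].
have [A AD] : exists A, A \notin D.
  have : 0 < #|[set i | i \notin D]| by rewrite Hn.
  by rewrite card_gt0 => /set0Pn[A]; rewrite inE => AD; exists A.
apply: (IH (rcons D A) [set A]).
- exact: Hcard.
- by rewrite rcons_uniq AD.
- apply: good_rcons gD _; apply: leq_trans (subset_leq_card (Hsubv A AD)) _.
  by rewrite N0 // cards0.
- by apply/subsetP => i; rewrite !inE mem_rcons inE => ->.
- exact: Inv1.
- move=> i iD v' vi vD; case: (HrD A i v' iD vi vD) => H.
    by apply: verts_part_U H; rewrite !inE.
  have iD' : i \notin D by move: iD; rewrite mem_rcons inE negb_or => /andP[].
  by have := N0 i iD'; move/setP/(_ v'); rewrite !inE vi H.
Qed.

End Main.

Theorem theorem2p4 (T C : finType) (m : nat) (F : cgraph_of T C)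
    (P : 'I_m -> cgraph_of T C) :
  frankenstein F P ->
  exists sigma : 'S_m,
    forall k : 'I_m, 0 < k ->
      #|verts (\bigcup_(j < m | j < k) P (sigma j)) :&: verts (P (sigma k))| <= 1.
Proof.
case=> [[HF Hm] Hpart Htype F1 F2].
have [D [uD gD allD]] := build HF Hpart Htype F1 F2 (erefl _) (D := [::]) (S := set0)
  (isT : uniq [::]) (ltac:(by case)) (sub0set _) (Inv0 F P)
  (ltac:(by move=> i _ v _ /vertsU[j]; rewrite inE)).
have sD : size D = m.
  rewrite -(card_uniqP uD) -[RHS]card_ord; apply: eq_card => i; by rewrite allD.
pose i0 := Ordinal Hm.
pose f := fun j : 'I_m => nth i0 D j.
have finj : injective f.
  move=> j j' /eqP; rewrite /f nth_uniq ?sD // => /eqP; exact: val_inj.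
exists (perm finj) => k k0.
have kD : k < size D by rewrite sD.
have Hsplit : D = take k D ++ nth i0 D k :: drop k.+1 D by rewrite -drop_nth // cat_take_drop.
have := gD _ _ _ Hsplit; rewrite permE /f.
have -> : \bigcup_(j < m | j < k) P (perm finj j) = U P [set i in take k D].
  apply/setP => u; apply/bigcupP/bigcupP => [[j jk uP]|[i iT uP]].
    exists (perm finj j) => //; rewrite permE /f inE -(nth_take i0 jk).
    by apply: mem_nth; rewrite size_takel // sD ltnW.
  rewrite inE in iT.
  have jk : index i (take k D) < k by rewrite -{2}(size_takel (ltnW kD)) index_mem.
  have jm : index i (take k D) < m by apply: ltn_trans jk _.
  exists (Ordinal jm) => //; rewrite permE /f /= -(nth_take i0 jk) nth_index //.
done.
Qed.
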